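(* Let $n\ge4$, $a>1$, and let $f_a(\Gamma)$ be the closed curve parameterized for $\phi\in[0,2n\pi]$ by $$u(\phi)=-\Big(\tfrac{a+1}{n}\cos\phi-\tfrac{a+1}{n+1}\cos\big(\tfrac{n+1}{n}\phi\big)\Big)-1,\qquad v(\phi)=-\Big(\tfrac{a-1}{n}\sin\phi-\tfrac{a-1}{n+1}\sin\big(\tfrac{n+1}{n}\phi\big)\Big).$$ Then $f_a(\Gamma)$ meets the real axis to the right of its center $-1$ in exactly $\lfloor\frac{n+1}{2}\rfloor$ distinct points. If $n$ is even, each of these points is a double intersection (attained for two parameter values in $[0,2n\pi)$); if $n$ is odd, each is a double intersection except the outermost one, which is attained for exactly one parameter value ($\phi=n\pi$). *)

(* Defs.v *)
From Stdlib Require Import Reals Lra Lia List.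
Open Scope R_scope.

Definition u_curve (a : R) (n : nat) (phi : R) : R :=
  - ((a + 1) / INR n * cos phi
     - (a + 1) / (INR n + 1) * cos ((INR n + 1) / INR n * phi)) - 1.

Definition v_curve (a : R) (n : nat) (phi : R) : R :=
  - ((a - 1) / INR n * sin phi
     - (a - 1) / (INR n + 1) * sin ((INR n + 1) / INR n * phi)).

Definition hits (a : R) (n : nat) (x phi : R) : Prop :=
  0 <= phi < 2 * INR n * PI /\ v_curve a n phi = 0 /\ u_curve a n phi = x.

Definition double_point (a : R) (n : nat) (x : R) : Prop :=
  exists phi1 phi2, phi1 <> phi2 /\ hits a n x phi1 /\ hits a n x phi2 /\
    forall phi, hits a n x phi -> phi = phi1 \/ phi = phi2.

(* Main.v *)
From Stdlib Require Import Reals Lra Lia List ClassicalEpsilon ZArith.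
From Coquelicot Require Import Coquelicot.
Require Import Defs.
Open Scope R_scope.
Definition Af (N t : R) := 1/N - cos t/(N+1).
Definition Bf (N t : R) := sin t/(N+1).
Definition th (N t : R) := N * t - atan (Bf N t / Af N t).
Definition dth (N t : R) := N - (cos t/(N+1) * Af N t - sin t ^ 2/(N+1)^2)/(Af N t^2 + Bf N t^2).
Lemma Af_pos N t : 1 <= N -> 0 < Af N t.
Proof. intros. unfold Af. pose proof (COS_bound t). 
  assert (cos t / (N+1) <= 1/(N+1)) by (apply Rmult_le_compat_r; [apply Rlt_le, Rinv_0_lt_compat; lra| lra]).
  assert (1/(N+1) < 1/N). { apply Rmult_lt_compat_l; [lra|]. apply Rinv_lt_contravar; nra. }
  lra. Qed.
Lemma th_deriv N t : 1 <= N -> derivable_pt_lim (th N) t (dth N t).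
Proof. intros HN. pose proof (Af_pos N t HN) as HA. apply is_derive_Reals. unfold th, dth.
  unfold Af, Bf in *. auto_derive. { repeat split; try lra; auto_derive; auto. }
  assert (0 < (1 / N - cos t / (N + 1))^2 + (sin t/(N+1))^2) by nra.
  assert (0 < N+1 - cos t * N).
  { replace (N+1 - cos t * N) with (N*(N+1)*(1 / N - cos t / (N + 1))) by (field; lra).
    apply Rmult_lt_0_compat; nra. }
  field. repeat split; try lra. nra. Qed.
Lemma dth_pos N t : 1 <= N -> cos t < 1 -> 0 < dth N t.
Proof. intros HN Hc. pose proof (Af_pos N t HN) as HA. unfold dth.
  assert (0 < Af N t^2 + Bf N t^2) by nra.
  assert (E: dth N t = (2*N+1)*(1 - cos t)/(N*(N+1)*(Af N t^2 + Bf N t^2))).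
  { unfold dth. pose proof (sin2_cos2 t). unfold Rsqr in *. unfold Af, Bf in *.
    assert (Hs: sin t ^2 = 1 - cos t^2) by nra.
    replace ((sin t / (N + 1)) ^ 2) with (sin t ^ 2 / (N+1)^2) in * by (field; lra).
    rewrite Hs in *. field. repeat split; try lra. 
    assert (0 < N+1 - cos t * N).
    { replace (N+1 - cos t * N) with (N*(N+1)*(1 / N - cos t / (N + 1))) by (field; lra).
      apply Rmult_lt_0_compat; nra. }
    pose proof (COS_bound t). nra. }
  fold (dth N t). rewrite E. apply Rdiv_lt_0_compat; [nra|]. apply Rmult_lt_0_compat; nra.
Qed.
Lemma th_cont N : 1 <= N -> continuity (th N).
Proof. intros HN x. apply derivable_continuous_pt. exists (dth N x). apply th_deriv; auto. Qed.
Lemma th_incr N x y : 1 <= N -> 0 <= x -> x < y -> y <= PI -> th N x < th N y.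
Proof. intros HN Hx Hxy Hy.
  destruct (MVT_cor2 (th N) (dth N) x y Hxy) as [c [Hc1 Hc2]].
  { intros; apply th_deriv; auto. }
  assert (cos c < 1). { rewrite <- cos_0. apply cos_decreasing_1; lra. }
  pose proof (dth_pos N c HN H). nra. Qed.
Lemma th_0 N : th N 0 = 0.
Proof. unfold th, Bf. rewrite sin_0. unfold Rdiv. rewrite !Rmult_0_l, atan_0. ring. Qed.
Lemma th_PI N : th N PI = N * PI.
Proof. unfold th, Bf. rewrite sin_PI. unfold Rdiv. rewrite !Rmult_0_l, atan_0. ring. Qed.
Definition Rez (N t : R) := cos (N*t)/N - cos ((N+1)*t)/(N+1).
Definition Imz (N t : R) := sin (N*t)/N - sin ((N+1)*t)/(N+1).
Lemma polar N t : 1 <= N -> exists rho, 0 < rho /\ Rez N t = rho * cos (th N t) /\ Imz N t = rho * sin (th N t).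
Proof. intros HN. pose proof (Af_pos N t HN) as HA.
  set (g := atan (Bf N t / Af N t)).
  assert (Hcg: 0 < cos g). { pose proof (atan_bound (Bf N t / Af N t)). apply cos_gt_0; fold g in H; lra. }
  assert (Hsg: sin g = Bf N t / Af N t * cos g).
  { pose proof (tan_atan (Bf N t / Af N t)) as Ht. fold g in Ht. unfold tan in Ht. rewrite <- Ht. field. lra. }
  assert (HR: Rez N t = cos (N*t) * Af N t + sin (N*t) * Bf N t).
  { unfold Rez, Af, Bf. replace ((N+1)*t) with (N*t + t) by ring. rewrite cos_plus. field. lra. }
  assert (HI: Imz N t = sin (N*t) * Af N t - cos (N*t) * Bf N t).
  { unfold Imz, Af, Bf. replace ((N+1)*t) with (N*t + t) by ring. rewrite sin_plus. field. lra. }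
  exists (Af N t / cos g). split. { apply Rdiv_lt_0_compat; auto. }
  unfold th. fold g. rewrite cos_minus, sin_minus, Hsg, HR, HI. split; field; lra.
Qed.
Lemma Rez_eq N t : 1 <= N -> Rez N t = cos (N*t) * Af N t + sin (N*t) * Bf N t.
Proof. intros. unfold Rez, Af, Bf. replace ((N+1)*t) with (N*t + t) by ring. rewrite cos_plus. field. lra. Qed.
Lemma Imz_eq N t : 1 <= N -> Imz N t = sin (N*t) * Af N t - cos (N*t) * Bf N t.
Proof. intros. unfold Imz, Af, Bf. replace ((N+1)*t) with (N*t + t) by ring. rewrite sin_plus. field. lra. Qed.
Lemma mod2 N t : 1 <= N -> Rez N t ^ 2 + Imz N t ^ 2 = 1/N^2 + 1/(N+1)^2 - 2 * cos t/(N*(N+1)).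
Proof. intros. rewrite Rez_eq, Imz_eq by auto. pose proof (sin2_cos2 (N*t)). pose proof (sin2_cos2 t).
  unfold Rsqr in *. unfold Af, Bf.
  replace ((cos (N * t) * (1 / N - cos t / (N + 1)) + sin (N * t) * (sin t / (N + 1))) ^ 2 +
   (sin (N * t) * (1 / N - cos t / (N + 1)) - cos (N * t) * (sin t / (N + 1))) ^ 2)
  with ((sin (N * t) * sin (N * t) + cos (N * t) * cos (N * t)) * ((1 / N - cos t / (N + 1))^2 + (sin t / (N + 1))^2)) by ring.
  rewrite H0. replace ((sin t / (N + 1))^2) with ((sin t * sin t) / (N + 1)^2) by (field; lra).
  replace (sin t * sin t) with (1 - cos t * cos t) by lra. field. lra. Qed.
Lemma Rez_sym n t : Rez (INR n) (2*PI - t) = Rez (INR n) t.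
Proof. unfold Rez. replace (INR n + 1) with (INR (S n)) by (rewrite S_INR; ring).
  replace (INR n * (2*PI - t)) with (- (INR n * t) + 2 * INR n * PI) by ring.
  replace (INR (S n) * (2*PI - t)) with (- (INR (S n) * t) + 2 * INR (S n) * PI) by ring.
  rewrite !cos_period, !cos_neg. ring. Qed.
Lemma Imz_sym n t : Imz (INR n) (2*PI - t) = - Imz (INR n) t.
Proof. unfold Imz. replace (INR n + 1) with (INR (S n)) by (rewrite S_INR; ring).
  replace (INR n * (2*PI - t)) with (- (INR n * t) + 2 * INR n * PI) by ring.
  replace (INR (S n) * (2*PI - t)) with (- (INR (S n) * t) + 2 * INR (S n) * PI) by ring.
  rewrite !sin_period, !sin_neg. unfold Rdiv. ring. Qed.
Lemma cos_oddpi k : Nat.Odd k -> cos (INR k * PI) = -1 /\ sin (INR k * PI) = 0.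
Proof. intros [m ->]. replace (INR (2*m+1) * PI) with (PI + 2 * INR m * PI)
  by (rewrite plus_INR, mult_INR; simpl; ring).
  rewrite cos_period, sin_period, cos_PI, sin_PI. auto. Qed.
Lemma cos_evenpi k : Nat.Even k -> cos (INR k * PI) = 1.
Proof. intros [m ->]. replace (INR (2*m) * PI) with (0 + 2 * INR m * PI)
  by (rewrite mult_INR; simpl; ring). rewrite cos_period, cos_0. auto. Qed.
Lemma th_range N t : 1 <= N -> 0 <= t <= PI -> 0 <= th N t <= N * PI.
Proof. intros HN Ht. pose proof PI_RGT_0. split.
- destruct (Req_dec t 0) as [->|h]. rewrite th_0; lra. rewrite <- (th_0 N). apply Rlt_le, th_incr; lra.
- destruct (Req_dec t PI) as [->|h]. rewrite th_PI; lra. rewrite <- (th_PI N). apply Rlt_le, th_incr; lra.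
Qed.
Lemma th_inj N x y : 1 <= N -> 0 <= x <= PI -> 0 <= y <= PI -> th N x = th N y -> x = y.
Proof. intros HN Hx Hy E. destruct (Rtotal_order x y) as [h|[h|h]]; auto.
  - pose proof (th_incr N x y HN ltac:(lra) h ltac:(lra)). lra.
  - pose proof (th_incr N y x HN ltac:(lra) h ltac:(lra)). lra. Qed.
Lemma classify n t : (1 <= n)%nat -> 0 <= t <= PI -> Imz (INR n) t = 0 -> Rez (INR n) t < 0 ->
  exists k, Nat.Odd k /\ (k <= n)%nat /\ th (INR n) t = INR k * PI.
Proof. intros Hn Ht HI HR. assert (HN: 1 <= INR n) by (apply (le_INR 1); auto).
  destruct (polar (INR n) t HN) as [rho [Hr [E1 E2]]].
  assert (Hs: sin (th (INR n) t) = 0). { rewrite HI in E2. symmetry in E2. apply Rmult_integral in E2. lra. }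
  assert (Hc: cos (th (INR n) t) < 0). { rewrite E1 in HR. nra. }
  destruct (sin_eq_0_0 _ Hs) as [z Hz].
  pose proof (th_range (INR n) t HN Ht) as Hrg. rewrite Hz in Hrg.
  pose proof PI_RGT_0.
  assert (Hz0: (0 <= z)%Z). { apply le_IZR. nra. }
  destruct (Z_of_nat_complete z Hz0) as [k ->]. rewrite <- INR_IZR_INZ in Hz, Hrg.
  exists k. assert (k <= n)%nat. { apply INR_le. nra. }
  destruct (Nat.Even_or_Odd k) as [He|Ho].
  - rewrite Hz, cos_evenpi in Hc; auto. lra.
  - auto. Qed.
Definition Tk n k := epsilon (inhabits 0) (fun t => 0 <= t <= PI /\ th (INR n) t = INR k * PI).
Lemma Tk_spec n k : (1 <= n)%nat -> (k <= n)%nat -> 0 <= Tk n k <= PI /\ th (INR n) (Tk n k) = INR k * PI.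
Proof. intros Hn Hk. assert (HN: 1 <= INR n) by (apply (le_INR 1); auto).
  unfold Tk. apply epsilon_spec.
  assert (Hf: continuity (fun t => th (INR n) t - INR k * PI)).
  { apply continuity_minus. apply th_cont; auto. apply continuity_const. intros x y; auto. }
  pose proof PI_RGT_0. pose proof (le_INR _ _ Hk). pose proof (pos_INR k).
  destruct (IVT_cor _ 0 PI Hf ltac:(lra)) as [t [Ht Hft]].
  { rewrite th_0, th_PI. 
    assert (0 <= INR k*PI * ((INR n - INR k)*PI)) by (apply Rmult_le_pos; apply Rmult_le_pos; lra).
    replace ((0 - INR k * PI) * (INR n * PI - INR k * PI)) with (-(INR k*PI * ((INR n - INR k)*PI))) by ring. lra. }
  exists t. split; auto. lra. Qed.
Lemma Tk_uniq n k t : (1 <= n)%nat -> (k <= n)%nat -> 0 <= t <= PI -> th (INR n) t = INR k * PI -> t = Tk n k.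
Proof. intros Hn Hk Ht E. destruct (Tk_spec n k Hn Hk). apply (th_inj (INR n)); auto.
  apply (le_INR 1); auto. congruence. Qed.
Lemma u_eq a n phi : (1<=n)%nat -> u_curve a n phi = -(a+1) * Rez (INR n) (phi / INR n) - 1.
Proof. intros Hn. assert (HN: 1 <= INR n) by (apply (le_INR 1); auto).
  unfold u_curve, Rez. replace (INR n * (phi/INR n)) with phi by (field; lra).
  replace ((INR n+1)*(phi/INR n)) with ((INR n+1)/INR n*phi) by (field; lra). field. lra. Qed.
Lemma v_eq a n phi : (1<=n)%nat -> v_curve a n phi = -(a-1) * Imz (INR n) (phi / INR n).
Proof. intros Hn. assert (HN: 1 <= INR n) by (apply (le_INR 1); auto).
  unfold v_curve, Imz. replace (INR n * (phi/INR n)) with phi by (field; lra).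
  replace ((INR n+1)*(phi/INR n)) with ((INR n+1)/INR n*phi) by (field; lra). field. lra. Qed.
Definition Xk a n k := u_curve a n (INR n * Tk n k).
Lemma Xk_eq a n k : (1<=n)%nat -> Xk a n k = -(a+1) * Rez (INR n) (Tk n k) - 1.
Proof. intros Hn. assert (HN: 1 <= INR n) by (apply (le_INR 1); auto).
  unfold Xk. rewrite u_eq; auto. do 3 f_equal. field. lra. Qed.
Lemma Tk_z n k : (1<=n)%nat -> Nat.Odd k -> (k <= n)%nat ->
  Rez (INR n) (Tk n k) < 0 /\ Imz (INR n) (Tk n k) = 0.
Proof. intros Hn Hk Hkn. assert (HN: 1 <= INR n) by (apply (le_INR 1); auto).
  destruct (Tk_spec n k Hn Hkn) as [HT Hth].
  destruct (polar (INR n) (Tk n k) HN) as [rho [Hr [E1 E2]]].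
  rewrite Hth in E1, E2. destruct (cos_oddpi k Hk) as [c s]. rewrite c in E1; rewrite s in E2.
  split; lra. Qed.
Lemma hits_Tk a n k : (1<=n)%nat -> 1 < a -> Nat.Odd k -> (k <= n)%nat ->
  hits a n (Xk a n k) (INR n * Tk n k).
Proof. intros Hn Ha Hk Hkn. assert (HN: 1 <= INR n) by (apply (le_INR 1); auto).
  destruct (Tk_spec n k Hn Hkn) as [HT Hth]. destruct (Tk_z n k Hn Hk Hkn) as [HR HI].
  pose proof PI_RGT_0. split; [|split].
  - split; [nra|]. replace (2*INR n*PI) with (INR n*(2*PI)) by ring. apply Rmult_lt_compat_l; lra.
  - rewrite v_eq by auto. replace (INR n * Tk n k / INR n) with (Tk n k) by (field; lra). rewrite HI. ring.
  - reflexivity. Qed.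
Lemma Tk_bounds n k : (1<=n)%nat -> Nat.Odd k -> (k < n)%nat -> 0 < Tk n k < PI.
Proof. intros Hn Hk Hkn. assert (HN: 1 <= INR n) by (apply (le_INR 1); auto).
  destruct (Tk_spec n k Hn ltac:(lia)) as [HT Hth]. pose proof PI_RGT_0.
  assert (1 <= k)%nat by (destruct Hk; lia). 
  split.
  - destruct (Req_dec (Tk n k) 0) as [h|h]; [|lra]. rewrite h, th_0 in Hth.
    pose proof (le_INR 1 k H0). simpl in H1. nra.
  - destruct (Req_dec (Tk n k) PI) as [h|h]; [|lra]. rewrite h, th_PI in Hth.
    assert (INR n = INR k) by (apply Rmult_eq_reg_r with PI; lra). apply INR_eq in H1. lia. Qed.
Lemma hits_Tk2 a n k : (1<=n)%nat -> 1 < a -> Nat.Odd k -> (k < n)%nat ->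
  hits a n (Xk a n k) (INR n * (2*PI - Tk n k)).
Proof. intros Hn Ha Hk Hkn. assert (HN: 1 <= INR n) by (apply (le_INR 1); auto).
  destruct (Tk_z n k Hn Hk ltac:(lia)) as [HR HI]. pose proof (Tk_bounds n k Hn Hk Hkn).
  pose proof PI_RGT_0. split; [|split].
  - split; [nra|]. replace (2*INR n*PI) with (INR n*(2*PI)) by ring. apply Rmult_lt_compat_l; lra.
  - rewrite v_eq by auto. replace (INR n * (2*PI - Tk n k) / INR n) with (2*PI - Tk n k) by (field; lra).
    rewrite Imz_sym, HI. ring.
  - rewrite u_eq, Xk_eq by auto. replace (INR n * (2*PI - Tk n k) / INR n) with (2*PI - Tk n k) by (field; lra).
    rewrite Rez_sym. reflexivity. Qed.
Lemma classify_hits a n x phi : (1<=n)%nat -> 1 < a -> hits a n x phi -> -1 < x ->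
  exists k, Nat.Odd k /\ (k <= n)%nat /\ x = Xk a n k /\
    (phi = INR n * Tk n k \/ phi = INR n * (2*PI - Tk n k)).
Proof. intros Hn Ha [Hphi [Hv Hu]] Hx. assert (HN: 1 <= INR n) by (apply (le_INR 1); auto).
  pose proof PI_RGT_0.
  set (t := phi / INR n) in *.
  assert (Ht: 0 <= t < 2*PI). { unfold t. split. apply Rdiv_le_0_compat; lra.
    apply Rmult_lt_reg_l with (INR n); [lra|]. replace (INR n * (phi/INR n)) with phi by (field; lra). lra. }
  rewrite v_eq in Hv by auto. rewrite u_eq in Hu by auto. fold t in Hv, Hu.
  assert (HI: Imz (INR n) t = 0). { apply Rmult_integral in Hv. lra. }
  assert (HR: Rez (INR n) t < 0) by nra.
  assert (Hphi': phi = INR n * t) by (unfold t; field; lra).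
  destruct (Rle_lt_dec t PI) as [h|h].
  - destruct (classify n t Hn ltac:(lra) HI HR) as [k [Hk [Hkn Hth]]].
    pose proof (Tk_uniq n k t Hn Hkn ltac:(lra) Hth) as E.
    exists k. repeat split; auto. rewrite Xk_eq by auto. rewrite <- E. lra. left. rewrite <- E. auto.
  - assert (HI': Imz (INR n) (2*PI - t) = 0) by (rewrite Imz_sym; lra).
    assert (HR': Rez (INR n) (2*PI - t) < 0) by (rewrite Rez_sym; lra).
    destruct (classify n (2*PI - t) Hn ltac:(lra) HI' HR') as [k [Hk [Hkn Hth]]].
    pose proof (Tk_uniq n k (2*PI - t) Hn Hkn ltac:(lra) Hth) as E.
    exists k. repeat split; auto. rewrite Xk_eq by auto. rewrite <- E, Rez_sym. lra.
    right. rewrite <- E. rewrite Hphi'. f_equal. ring. Qed.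
Lemma cos_inj x y : 0 <= x <= PI -> 0 <= y <= PI -> cos x = cos y -> x = y.
Proof. intros Hx Hy E. destruct (Rtotal_order x y) as [h|[h|h]]; auto.
  - pose proof (cos_decreasing_1 x y ltac:(lra) ltac:(lra) ltac:(lra) ltac:(lra) h). lra.
  - pose proof (cos_decreasing_1 y x ltac:(lra) ltac:(lra) ltac:(lra) ltac:(lra) h). lra. Qed.
Lemma Rez2 n k : (1<=n)%nat -> Nat.Odd k -> (k <= n)%nat ->
  Rez (INR n) (Tk n k) ^ 2 = 1/INR n^2 + 1/(INR n+1)^2 - 2 * cos (Tk n k)/(INR n*(INR n+1)).
Proof. intros. rewrite <- mod2. destruct (Tk_z n k) as [_ ->]; auto. ring. apply (le_INR 1); auto. Qed.
Lemma Xk_inj a n j k : (1<=n)%nat -> 1 < a -> Nat.Odd j -> (j <= n)%nat -> Nat.Odd k -> (k <= n)%nat ->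
  Xk a n j = Xk a n k -> j = k.
Proof. intros Hn Ha Hj Hjn Hk Hkn E. assert (HN: 1 <= INR n) by (apply (le_INR 1); auto).
  rewrite !Xk_eq in E by auto.
  assert (ER: Rez (INR n) (Tk n j) = Rez (INR n) (Tk n k)) by nra.
  pose proof (Rez2 n j Hn Hj Hjn). pose proof (Rez2 n k Hn Hk Hkn). rewrite ER in H.
  assert (Ec: cos (Tk n j) = cos (Tk n k)).
  { assert (2 * cos (Tk n j)/(INR n*(INR n+1)) = 2 * cos (Tk n k)/(INR n*(INR n+1))) by lra.
    apply Rmult_eq_reg_r with (2 / (INR n*(INR n+1))). unfold Rdiv in *. lra.
    apply Rgt_not_eq. apply Rdiv_lt_0_compat; nra. }
  destruct (Tk_spec n j Hn Hjn) as [Tj Thj]. destruct (Tk_spec n k Hn Hkn) as [Tk' Thk].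
  pose proof (cos_inj _ _ Tj Tk' Ec) as ET. rewrite ET, Thk in Thj.
  pose proof PI_RGT_0. apply INR_eq. apply Rmult_eq_reg_r with PI; lra. Qed.
Lemma Tn_PI n : (1<=n)%nat -> Tk n n = PI.
Proof. intros Hn. symmetry. apply Tk_uniq; auto. pose proof PI_RGT_0; lra. apply th_PI. Qed.
Lemma Xk_max a n k : (1<=n)%nat -> 1 < a -> Nat.Odd n -> Nat.Odd k -> (k <= n)%nat -> Xk a n k <= Xk a n n.
Proof. intros Hn Ha Hno Hk Hkn. assert (HN: 1 <= INR n) by (apply (le_INR 1); auto).
  rewrite !Xk_eq by auto.
  pose proof (Rez2 n k Hn Hk Hkn). pose proof (Rez2 n n Hn Hno (le_n n)).
  rewrite Tn_PI, cos_PI in H0 by auto.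
  destruct (Tk_z n k Hn Hk Hkn) as [R1 _]. destruct (Tk_z n n Hn Hno (le_n n)) as [R2 _].
  assert (2 * cos (Tk n k)/(INR n*(INR n+1)) >= 2 * (-1)/(INR n*(INR n+1))).
  { unfold Rdiv. apply Rmult_ge_compat_r. apply Rle_ge, Rlt_le, Rinv_0_lt_compat; nra.
    pose proof (COS_bound (Tk n k)). lra. }
  rewrite Tn_PI in * by auto.
  assert (Rez (INR n) (Tk n k) ^2 <= Rez (INR n) PI ^2) by lra.
  assert (Rez (INR n) PI <= Rez (INR n) (Tk n k)) by nra. nra. Qed.
Lemma dbl a n k : (1<=n)%nat -> 1 < a -> Nat.Odd k -> (k < n)%nat -> double_point a n (Xk a n k).
Proof. intros Hn Ha Hk Hkn. assert (HN: 1 <= INR n) by (apply (le_INR 1); auto).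
  pose proof (Tk_bounds n k Hn Hk Hkn).
  exists (INR n * Tk n k), (INR n * (2*PI - Tk n k)). split; [|split; [|split]].
  - intro E. apply Rmult_eq_reg_l in E; lra.
  - apply hits_Tk; auto; lia.
  - apply hits_Tk2; auto.
  - intros phi Hh. assert (-1 < Xk a n k).
    { rewrite Xk_eq by auto. destruct (Tk_z n k Hn Hk ltac:(lia)). nra. }
    destruct (classify_hits a n _ phi Hn Ha Hh H0) as [j [Hj [Hjn [E Hp]]]].
    assert (j = k) by (apply (Xk_inj a n j k); auto; lia). subst j. auto. Qed.
Lemma div2_lt n j : (j < (n+1)/2)%nat <-> (2*j+1 <= n)%nat.
Proof. pose proof (Nat.div_mod (n+1) 2 ltac:(lia)). pose proof (Nat.mod_upper_bound (n+1) 2 ltac:(lia)). lia. Qed.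
Lemma Xk_gt a n k : (1<=n)%nat -> 1 < a -> Nat.Odd k -> (k <= n)%nat -> -1 < Xk a n k.
Proof. intros. rewrite Xk_eq by auto. destruct (Tk_z n k); auto. nra. Qed.

Theorem lemma5 (n : nat) (a : R) (hn : (4 <= n)%nat) (ha : 1 < a) :
  exists xs : list R,
    NoDup xs /\
    length xs = ((n + 1) / 2)%nat /\
    (forall x, In x xs <-> (-1 < x /\ exists phi, hits a n x phi)) /\
    (Nat.Even n -> forall x, In x xs -> double_point a n x) /\
    (Nat.Odd n ->
       exists xm, In xm xs /\ (forall x, In x xs -> x <= xm) /\
         (forall phi, hits a n xm phi <-> phi = INR n * PI) /\
         (forall x, In x xs -> x <> xm -> double_point a n x)).
Proof.
  assert (Hn: (1<=n)%nat) by lia.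
  exists (map (fun j => Xk a n (2*j+1)) (seq 0 ((n+1)/2))).
  assert (Hodd: forall j, Nat.Odd (2*j+1)) by (intro j; exists j; lia).
  split; [|split; [|split; [|split]]].
  - apply NoDup_map_NoDup_ForallPairs; [|apply seq_NoDup].
    intros i j Hi Hj E. apply in_seq in Hi, Hj.
    assert (2*i+1 = 2*j+1)%nat; [apply (Xk_inj a n); auto; apply div2_lt; lia|lia].
  - rewrite length_map, length_seq. reflexivity.
  - intro x; split.
    + intros Hin. apply in_map_iff in Hin as [j [<- Hj]]. apply in_seq in Hj.
      assert (2*j+1 <= n)%nat by (apply div2_lt; lia).
      split. apply Xk_gt; auto. exists (INR n * Tk n (2*j+1)). apply hits_Tk; auto.
    + intros [Hx [phi Hh]]. destruct (classify_hits a n x phi Hn ha Hh Hx) as [k [[m Hm] [Hkn [-> _]]]].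
      apply in_map_iff. exists m. split. subst; f_equal; lia. apply in_seq. split; [lia|].
      simpl. apply div2_lt. lia.
  - intros He x Hin. apply in_map_iff in Hin as [j [<- Hj]]. apply in_seq in Hj.
    assert (2*j+1 <= n)%nat by (apply div2_lt; lia).
    apply dbl; auto. destruct He as [m Hm]. lia.
  - intros Ho. exists (Xk a n n). destruct Ho as [m Hm].
    assert (Ho: Nat.Odd n) by (exists m; auto).
    split; [|split; [|split]].
    + apply in_map_iff. exists m. split. rewrite <- Hm. reflexivity.
      apply in_seq; split; [lia|]. simpl. apply div2_lt; lia.
    + intros x Hin. apply in_map_iff in Hin as [j [<- Hj]]. apply in_seq in Hj.
      assert (2*j+1 <= n)%nat by (apply div2_lt; lia). apply Xk_max; auto.
    + intro phi; split.
      * intro Hh. destruct (classify_hits a n _ phi Hn ha Hh (Xk_gt a n n Hn ha Ho (le_n n)))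
          as [k [Hk [Hkn [E Hp]]]].
        assert (k = n) by (symmetry; apply (Xk_inj a n n k); auto). subst k.
        rewrite Tn_PI in Hp by auto. destruct Hp as [->| ->]; ring.
      * intros ->. pose proof (hits_Tk a n n Hn ha Ho (le_n n)) as H. rewrite Tn_PI in H; auto.
    + intros x Hin Hne. apply in_map_iff in Hin as [j [<- Hj]]. apply in_seq in Hj.
      assert (2*j+1 <= n)%nat by (apply div2_lt; lia).
      apply dbl; auto. destruct (Nat.eq_dec (2*j+1) n) as [e|e]; [|lia].
      exfalso. apply Hne. rewrite e. reflexivity.
Qed.
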